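(* Let $A$ be a real symmetric $n\times n$ matrix with symmetric tropical rank $r$, and let $\mathbf a_n$ denote its $n$th column. Define the $(n+1)\times(n+1)$ matrix $$A''=\begin{pmatrix}A&\mathbf a_n\\ \mathbf a_n^{T}&a_{n,n}\end{pmatrix},$$ obtained by duplicating the last column and then the last row. Then $A''$ is symmetric and has symmetric tropical rank $r$.
   Context: For an $r\times r$ submatrix of a real symmetric matrix $A$ with row index set $I$ and column index set $J$, each bijection $\rho:I\to J$ gives a monomial $\prod_{i\in I}X_{i,\rho(i)}$ in commuting variables subject to $X_{i,j}=X_{j,i}$, with value $\sum_{i\in I}A_{i,\rho(i)}$; the submatrix is symmetrically tropically singular if the minimum value is attained by at least two distinct monomials. The symmetric tropical rank of $A$ is the largest $r$ such that $A$ has an $r\times r$ submatrix (arbitrary row and column sets) that is not symmetrically tropically singular. *)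

(* Defs.v *)
From HB Require Import structures.
From mathcomp Require Import all_boot all_order all_algebra.
Set Implicit Arguments. Unset Strict Implicit. Unset Printing Implicit Defensive.
Import Order.TTheory GRing.Theory Num.Theory.
Local Open Scope ring_scope.

Section SymTrop.
Variables (R : realFieldType) (n : nat).
Implicit Types (A : 'M[R]_n) (I J : {set 'I_n}) (rho : {ffun 'I_n -> 'I_n}).

Definition is_bij I J rho : bool :=
  [forall x in I, forall y in I, (rho x == rho y) ==> (x == y)] &&
  (rho @: I == J).

Definition upair_eq (a b x y : 'I_n) : bool :=
  ((a == x) && (b == y)) || ((a == y) && (b == x)).

(* The monomial prod_{i in I} X_{i, rho i}, with X_{ij} = X_{ji}, encoded as
   its multiplicity function: (x,y) |-> number of i in I with {i, rho i} = {x,y}.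
   Two monomials are equal iff these functions agree. *)
Definition monomial I rho : {ffun 'I_n * 'I_n -> nat} :=
  [ffun p => #|[set i in I | upair_eq i (rho i) p.1 p.2]|].

Definition mon_value A I rho : R := \sum_(i in I) A i (rho i).

Definition sym_trop_singular A I J : bool :=
  [exists rho1, exists rho2,
    [&& is_bij I J rho1, is_bij I J rho2,
        monomial I rho1 != monomial I rho2,
        [forall rho, is_bij I J rho ==> (mon_value A I rho1 <= mon_value A I rho)]
      & [forall rho, is_bij I J rho ==> (mon_value A I rho2 <= mon_value A I rho)]]].

Definition sym_trop_rank A : nat :=
  \max_(I : {set 'I_n})
    \max_(J : {set 'I_n} | (#|J| == #|I|) && ~~ sym_trop_singular A I J) #|I|.

End SymTrop.

(* Main.v *)
Require Import Defs.
From mathcomp Require Import all_boot all_order all_algebra.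
Import Order.TTheory GRing.Theory Num.Theory.
Set Implicit Arguments. Unset Strict Implicit. Unset Printing Implicit Defensive.

Section Count.
Variable p : nat.
Implicit Types (I J : {set 'I_p}) (rho : {ffun 'I_p -> 'I_p}).

Lemma cardP I (P : pred 'I_p) : #|[set i in I | P i]| = \sum_(i in I) P i.
Proof.
rewrite -sum1dep_card big_mkcondr /=; apply: eq_bigr => i _; by case: (P i).
Qed.

Lemma monomialE I rho pr : monomial I rho pr = \sum_(i in I) upair_eq i (rho i) pr.1 pr.2.
Proof. by rewrite /monomial ffunE cardP. Qed.

Definition canon (c d : 'I_p) := if c <= d then (c,d) else (d,c).

Lemma canon_single (c d : 'I_p) (Q : 'I_p -> 'I_p -> bool) :
  (forall a b, Q a b = Q b a) ->
  (Q c d : nat) = \sum_(pr : 'I_p * 'I_p | pr.1 <= pr.2) Q pr.1 pr.2 * upair_eq c d pr.1 pr.2.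
Proof.
move=> Qs.
have hc : (canon c d).1 <= (canon c d).2.
  by rewrite /canon; case: ifP => //= /negbT; rewrite -ltnNge => /ltnW.
rewrite (bigD1 (canon c d)) //= big1 ?addn0.
- have -> : upair_eq c d (canon c d).1 (canon c d).2.
    by rewrite /canon /upair_eq; case: ifP => _ /=; rewrite !eqxx ?orbT.
  by rewrite muln1 /canon; case: ifP => //= _; rewrite Qs.
- case=> a b /= /andP [hab hne].
  case h : (upair_eq c d a b); last by rewrite muln0.
  exfalso; move: h hne; rewrite /upair_eq /canon => /orP [] /andP [/eqP ea /eqP eb]; subst a b.
  + by rewrite hab eqxx.
  + case: ifP => hcd; last by rewrite eqxx.
    have e : c = d by apply/val_inj/eqP; rewrite eqn_leq hcd hab.
    by subst; rewrite eqxx.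
Qed.

Lemma count_mon I rho (Q : 'I_p -> 'I_p -> bool) : (forall a b, Q a b = Q b a) ->
  \sum_(i in I) Q i (rho i) = \sum_(pr : 'I_p * 'I_p | pr.1 <= pr.2) Q pr.1 pr.2 * monomial I rho pr.
Proof.
move=> Qs.
under [RHS]eq_bigr => pr _ do rewrite monomialE big_distrr /=.
rewrite exchange_big /=; apply: eq_bigr => i _; exact: canon_single.
Qed.

Lemma is_bijP I J rho : is_bij I J rho <-> ({in I &, injective rho} /\ rho @: I = J).
Proof.
rewrite /is_bij; split.
- case/andP => /forall_inP h /eqP ->; split => // x y xI yI e.
  by move: (h x xI) => /forall_inP /(_ y yI) /implyP /(_ (introT eqP e)) /eqP.
- case=> inj <-; rewrite eqxx andbT; apply/forall_inP => x xI; apply/forall_inP => y yI.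
  by apply/implyP => /eqP e; apply/eqP; exact: inj.
Qed.

End Count.

Section Swap.
Variables (R : realFieldType) (p : nat).
Implicit Types (I J : {set 'I_p}) (rho : {ffun 'I_p -> 'I_p}) (C : 'M[R]_p).
Local Open Scope ring_scope.

Definition tr (u v i : 'I_p) := if i == u then v else if i == v then u else i.

Lemma trK u v : involutive (tr u v).
Proof.
move=> i; rewrite /tr.
case: (eqVneq i u) => [->|hu]; first by rewrite eqxx; case: (eqVneq v u) => [->|]//.
case: (eqVneq i v) => [->|hv]; first by rewrite eqxx.
by rewrite (negbTE hu) (negbTE hv).
Qed.

Lemma trI I u v i : u \in I -> v \in I -> (tr u v i \in I) = (i \in I).
Proof.
move=> uI vI; rewrite /tr.
case: (eqVneq i u) => [->|hu]; first by rewrite uI vI.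
by case: (eqVneq i v) => [->|hv]; rewrite ?uI ?vI.
Qed.

Lemma trS I u v : u \in I -> v \in I -> tr u v @: I = I.
Proof.
move=> uI vI; apply/eqP; rewrite eqEcard card_imset ?leqnn ?andbT; last exact: inv_inj (trK u v).
by apply/subsetP => x /imsetP [y yI ->]; rewrite trI.
Qed.

Definition swap rho u v : {ffun 'I_p -> 'I_p} := [ffun i => rho (tr u v i)].

Lemma swap_bij I J rho u v : is_bij I J rho -> u \in I -> v \in I -> is_bij I J (swap rho u v).
Proof.
move=> /is_bijP [inj eJ] uI vI; apply/is_bijP; split.
- move=> x y xI yI; rewrite !ffunE => e.
  apply: (inv_inj (trK u v)); apply: inj; rewrite ?trI //.
- rewrite -eJ -[in RHS](trS uI vI) -imset_comp; apply: eq_imset => i /=; by rewrite ffunE.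
Qed.

Lemma mon_valueE C I rho : mon_value C I rho = \sum_(i in I) C i (rho i).
Proof. by []. Qed.

Lemma swap_val_row C I rho u v : u \in I -> v \in I -> (forall j, C u j = C v j) ->
  mon_value C I (swap rho u v) = mon_value C I rho.
Proof.
move=> uI vI hr; rewrite /mon_value (reindex_inj (inv_inj (trK u v))) /=.
apply: eq_big => i; first by rewrite trI.
move=> _; rewrite ffunE trK /tr.
case: (eqVneq i u) => [->|hu]; first by rewrite hr.
by case: (eqVneq i v) => [->|hv]; rewrite ?hr.
Qed.

Lemma swap_val_col C I J rho u v : is_bij I J rho -> u \in I -> v \in I ->
  (forall i, C i (rho u) = C i (rho v)) ->
  mon_value C I (swap rho u v) = mon_value C I rho.
Proof.
move=> /is_bijP [inj _] uI vI hc; rewrite /mon_value; apply: eq_bigr => i iI.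
rewrite ffunE /tr.
case: (eqVneq i u) => [->|hu]; first by rewrite hc.
case: (eqVneq i v) => [->|hv]; first by rewrite hc.
done.
Qed.

Lemma swap_mon I J rho u v : is_bij I J rho -> u \in I -> v \in I -> u != v ->
  monomial I (swap rho u v) != monomial I rho.
Proof.
move=> /is_bijP [inj _] uI vI huv.
have hr : rho u != rho v by apply: contra huv => /eqP /inj; move=> /(_ uI vI) ->.
apply/eqP => e0; have := congr1 (fun m : {ffun 'I_p * 'I_p -> nat} => m (u, rho u)) e0; rewrite !monomialE /=.
rewrite (bigD1 u uI) [in RHS](bigD1 u uI) /= => e.
have : (\sum_(i in I | i != u) upair_eq i (swap rho u v i) u (rho u) <=
        \sum_(i in I | i != u) upair_eq i (rho i) u (rho u))%N.
  apply: leq_sum => i /andP [iI hiu]; rewrite ffunE /tr (negbTE hiu).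
  case: (eqVneq i v) => [->|hiv] //.
  rewrite /upair_eq eq_sym (negbTE huv) /=.
  case: (eqVneq v (rho u)) => [hv|] //=; case: (eqVneq (rho u) u) => [hu|] //=.
  by rewrite hv hu eqxx in huv.
move=> hle.
have h1 : upair_eq u (swap rho u v u) u (rho u) = false.
  rewrite ffunE /tr eqxx /upair_eq eqxx /= eq_sym (negbTE hr) /=.
  by apply/negP => /andP [/eqP a /eqP b]; rewrite -a b eqxx in hr.
have h2 : upair_eq u (rho u) u (rho u) = true by rewrite /upair_eq !eqxx.
rewrite h1 h2 /= add0n add1n in e.
by move: hle; rewrite e ltnn.
Qed.

End Swap.

Section Sing.
Variables (R : realFieldType) (p : nat).
Implicit Types (I J : {set 'I_p}) (rho : {ffun 'I_p -> 'I_p}) (C : 'M[R]_p).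
Local Open Scope ring_scope.

Lemma exists_bij I J : #|I| = #|J| -> exists rho, is_bij I J rho.
Proof.
move=> hc.
pose rho : {ffun 'I_p -> 'I_p} := [ffun i => nth i (enum J) (index i (enum I))].
have hlt : forall x, x \in I -> (index x (enum I) < size (enum J))%N.
  by move=> x xI; rewrite -cardE -hc cardE index_mem mem_enum.
have inj : {in I &, injective rho}.
  move=> x y xI yI; rewrite !ffunE => /eqP.
  rewrite (@set_nth_default _ _ y x) ?hlt // nth_uniq ?hlt ?enum_uniq // => /eqP e.
  transitivity (nth x (enum I) (index x (enum I))); first by rewrite nth_index ?mem_enum.
  by rewrite e nth_index ?mem_enum.
exists rho; apply/is_bijP; split => //.
apply/eqP; rewrite eqEcard (card_in_imset inj) hc leqnn andbT.
apply/subsetP => _ /imsetP [i iI ->]; rewrite ffunE.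
by rewrite -mem_enum mem_nth ?hlt.
Qed.

Lemma exists_min C I J : #|I| = #|J| -> exists2 rho, is_bij I J rho &
  forall rho', is_bij I J rho' -> mon_value C I rho <= mon_value C I rho'.
Proof.
move=> /exists_bij [rho0 h0].
case: (@arg_minP _ R _ rho0 (fun rho => is_bij I J rho) (fun rho => mon_value C I rho) h0) => rho h1 h2.
by exists rho.
Qed.

Lemma sing_swap C I J rho u v : is_bij I J rho ->
  (forall rho', is_bij I J rho' -> mon_value C I rho <= mon_value C I rho') ->
  u \in I -> v \in I -> u != v ->
  mon_value C I (swap rho u v) = mon_value C I rho -> sym_trop_singular C I J.
Proof.
move=> hb hmin uI vI huv hv.
apply/existsP; exists rho; apply/existsP; exists (swap rho u v).
rewrite hb (swap_bij hb) //= eq_sym (swap_mon hb) //=.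
apply/andP; split; apply/forallP => r; apply/implyP => hr; rewrite ?hv; exact: hmin.
Qed.

Lemma dup_row C I J x y : (forall j, C x j = C y j) -> x \in I -> y \in I -> x != y ->
  #|I| = #|J| -> sym_trop_singular C I J.
Proof.
move=> hr xI yI hxy hc; case: (exists_min C hc) => rho hb hmin.
apply: (sing_swap hb hmin xI yI hxy); exact: swap_val_row.
Qed.

Lemma dup_col C I J x y : (forall i, C i x = C i y) -> x \in J -> y \in J -> x != y ->
  #|I| = #|J| -> sym_trop_singular C I J.
Proof.
move=> hcol xJ yJ hxy hc; case: (exists_min C hc) => rho hb hmin.
have [inj eJ] := (is_bijP _ _ _).1 hb.
rewrite -eJ in xJ yJ; move: xJ yJ hcol hxy => /imsetP [u uI ->] /imsetP [v vI ->] hcol hxy.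
have huv : u != v by apply: contra hxy => /eqP ->.
apply: (sing_swap hb hmin uI vI huv); exact: (swap_val_col hb).
Qed.

End Sing.

Section Transfer.
Variables (R : realFieldType) (p q : nat) (f : 'I_p -> 'I_q) (B : 'M[R]_q) (C : 'M[R]_p).
Hypothesis hC : forall i j, C i j = B (f i) (f j).
Variables (I J : {set 'I_p}).
Hypotheses (injI : {in I &, injective f}) (injJ : {in J &, injective f}).
Local Open Scope ring_scope.

Definition lift (s : {ffun 'I_q -> 'I_q}) : {ffun 'I_p -> 'I_p} :=
  [ffun i => odflt i [pick j in J | f j == s (f i)]].
Definition push (r : {ffun 'I_p -> 'I_p}) : {ffun 'I_q -> 'I_q} :=
  [ffun y => odflt y (omap (fun i => f (r i)) [pick i in I | f i == y])].

Lemma liftK s : is_bij (f @: I) (f @: J) s ->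
  forall i, i \in I -> lift s i \in J /\ f (lift s i) = s (f i).
Proof.
move=> /is_bijP [_ e] i iI; rewrite ffunE.
case: pickP => [j /andP [jJ /eqP ->] | hn] //=.
have : s (f i) \in f @: J by rewrite -e; apply: imset_f; apply: imset_f.
case/imsetP => j jJ ej; move: (hn j); by rewrite jJ ej eqxx.
Qed.

Lemma lift_bij s : is_bij (f @: I) (f @: J) s -> is_bij I J (lift s).
Proof.
move=> hs; have K := liftK hs; have [sinj e] := (is_bijP _ _ _).1 hs.
apply/is_bijP; split.
- move=> x y xI yI ex.
  apply: injI => //; apply: sinj; rewrite ?imset_f //.
  by rewrite -(K x xI).2 -(K y yI).2 ex.
- apply/eqP; rewrite eqEsubset; apply/andP; split.
  + apply/subsetP => _ /imsetP [i iI ->]; exact: (K i iI).1.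
  + apply/subsetP => j jJ.
    have : f j \in s @: (f @: I) by rewrite e imset_f.
    case/imsetP => _ /imsetP [i iI ->] ej.
    apply/imsetP; exists i => //; apply: injJ => //; first exact: (K i iI).1.
    by rewrite (K i iI).2.
Qed.

Lemma lift_val s : is_bij (f @: I) (f @: J) s -> mon_value C I (lift s) = mon_value B (f @: I) s.
Proof.
move=> hs; rewrite /mon_value big_imset //=; apply: eq_bigr => i iI.
by rewrite hC (liftK hs iI).2.
Qed.

Lemma pushK r i : i \in I -> push r (f i) = f (r i).
Proof.
move=> iI; rewrite ffunE; case: pickP => [k /andP [kI /eqP ek] | hn] /=.
- by rewrite (injI kI iI ek).
- by move: (hn i); rewrite iI eqxx.
Qed.

Lemma push_bij r : is_bij I J r -> is_bij (f @: I) (f @: J) (push r).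
Proof.
move=> /is_bijP [rinj e]; apply/is_bijP; split.
- move=> _ _ /imsetP [x xI ->] /imsetP [y yI ->]; rewrite !pushK //.
  have rxJ : r x \in J by rewrite -e imset_f.
  have ryJ : r y \in J by rewrite -e imset_f.
  by move=> /(injJ rxJ ryJ) /(rinj x y xI yI) ->.
- rewrite -e -!imset_comp; apply: eq_in_imset => i iI /=; exact: pushK.
Qed.

Lemma push_val r : mon_value B (f @: I) (push r) = mon_value C I r.
Proof.
rewrite /mon_value big_imset //=; apply: eq_bigr => i iI.
by rewrite hC pushK.
Qed.

Lemma upair_sym (x y : 'I_q) a b : upair_eq (f a) (f b) x y = upair_eq (f b) (f a) x y.
Proof.
rewrite /upair_eq; case: (f a == x); case: (f b == y); case: (f a == y); case: (f b == x) => //.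
Qed.

Lemma transfer : sym_trop_singular B (f @: I) (f @: J) -> sym_trop_singular C I J.
Proof.
case/existsP => s1 /existsP [s2 /and5P [h1 h2 hne hm1 hm2]].
apply/existsP; exists (lift s1); apply/existsP; exists (lift s2).
rewrite !lift_bij //=.
apply/and3P; split.
- apply: contra hne => /eqP e; apply/eqP/ffunP => -[x y].
  rewrite !monomialE /= !big_imset //=.
  under eq_bigr => i iI do rewrite -(liftK h1 iI).2.
  under [RHS]eq_bigr => i iI do rewrite -(liftK h2 iI).2.
  rewrite (count_mon _ _ (upair_sym x y)) (count_mon _ _ (upair_sym x y)).
  by rewrite e.
- apply/forallP => r; apply/implyP => hr; rewrite lift_val //.
  rewrite -(push_val r); exact: (implyP (forallP hm1 _) (push_bij hr)).
- apply/forallP => r; apply/implyP => hr; rewrite lift_val //.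
  rewrite -(push_val r); exact: (implyP (forallP hm2 _) (push_bij hr)).
Qed.

End Transfer.

Lemma rank_le (R : realFieldType) p q (f : 'I_p -> 'I_q) (B : 'M[R]_q) (C : 'M[R]_p) :
  (forall i j, C i j = B (f i) (f j)) -> sym_trop_rank C <= sym_trop_rank B.
Proof.
move=> hC; apply/bigmax_leqP => I _; apply/bigmax_leqP => J /andP [/eqP hc hns].
have injI : {in I &, injective f}.
  move=> x y xI yI exy; apply/eqP; apply: contraNT hns => hxy.
  apply: (@dup_row _ _ C I J x y _ xI yI hxy (esym hc)).
  by move=> j; rewrite !hC exy.
have injJ : {in J &, injective f}.
  move=> x y xJ yJ exy; apply/eqP; apply: contraNT hns => hxy.
  apply: (@dup_col _ _ C I J x y _ xJ yJ hxy (esym hc)).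
  by move=> i; rewrite !hC exy.
rewrite -(card_in_imset injI).
apply: leq_trans (leq_bigmax (f @: I)).
apply: (leq_bigmax_cond (f @: J)).
apply/andP; split; first by rewrite (card_in_imset injI) (card_in_imset injJ) hc.
by apply: contra hns; exact: transfer.
Qed.

Local Open Scope ring_scope.

Theorem lemma6 (R : realFieldType) (n : nat) (A : 'M[R]_n.+1) (r : nat) :
  A^T = A ->
  sym_trop_rank A = r ->
  let A'' : 'M[R]_(n.+1 + 1) :=
    block_mx A (col ord_max A) (col ord_max A)^T (A ord_max ord_max)%:M in
  A''^T = A'' /\ sym_trop_rank A'' = r.
Proof.
move=> hsym hr A''.
have hA : forall i j, A i j = A j i by move=> i j; rewrite -{1}hsym mxE.
pose phi (i : 'I_(n.+1 + 1)) : 'I_n.+1 := if split i is inl j then j else ord_max.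
have hphi : forall i j, A'' i j = A (phi i) (phi j).
  move=> i j; rewrite /A'' /phi -(splitK i) -(splitK j) !unsplitK.
  case: (split i) => k; case: (split j) => l /=.
  + by rewrite block_mxEul.
  + by rewrite block_mxEur mxE.
  + by rewrite block_mxEdl !mxE hA.
  + by rewrite block_mxEdr mxE !ord1 eqxx mulr1n.
split.
  by rewrite /A'' tr_block_mx hsym trmxK tr_scalar_mx.
subst r; apply/eqP; rewrite eqn_leq; apply/andP; split.
  exact: (rank_le hphi).
apply: (@rank_le _ _ _ (lshift 1)) => i j.
by rewrite /A'' block_mxEul.
Qed.
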